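(* Let $q$ be a query with sensitivity $\Delta q$, let $k,\theta>0$, and let the random scale $b$ be such that $1/b$ is Gamma distributed with shape $k$ and scale $\theta$ (density $\frac{x^{k-1}e^{-x/\theta}}{\Gamma(k)\theta^k}$ for $x>0$). Then the R$^2$DP Laplace mechanism $\mathcal M_q(d,b)=q(d)+\mathrm{Lap}(b)$ satisfies $\big((k+1)\ln(1+\Delta q\,\theta)\big)$-differential privacy.
   Context: $\mathrm{Lap}(b)$ is the zero-mean Laplace distribution with density $\frac{1}{2b}e^{-|x|/b}$; the R$^2$DP Laplace mechanism draws the random scale $b$ (independently of the data) and then adds $\mathrm{Lap}(b)$ noise to $q(d)$. $\Delta q=\max|q(d)-q(d')|$ over datasets $d,d'$ differing in one individual's data. A mechanism is $\epsilon$-differentially private if $\mathbb P(\mathcal M(d)\in S)\le e^\epsilon\mathbb P(\mathcal M(d')\in S)$ for all such $d,d'$ and measurable $S$. *)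

(* Defs.v *)
From mathcomp Require Import all_boot all_order all_algebra.
From mathcomp Require Import all_classical all_reals all_analysis.
Set Implicit Arguments. Unset Strict Implicit. Unset Printing Implicit Defensive.
Import Order.TTheory GRing.Theory Num.Theory.
Import numFieldNormedType.Exports.
Local Open Scope classical_set_scope.
Local Open Scope ring_scope.

Definition Gamma_fun {R : realType} (k : R) : R :=
  fine (\int[@lebesgue_measure R]_(x in `]0%R, +oo[) (x `^ (k - 1) * expR (- x))%:E)%E.

Definition gamma_pdf {R : realType} (k theta x : R) : R :=
  x `^ (k - 1) * expR (- x / theta) / (Gamma_fun k * theta `^ k).

Definition laplace_pdf {R : realType} (b y : R) : R :=
  (2 * b)^-1 * expR (- `|y| / b).

(* R^2DP Laplace mechanism: X ~ Gamma(k, theta) is drawn (independently of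
   the data), the scale is b = 1/X, and Lap(b) noise is added to q d.
   This is the probability P(M_q(d, b) \in S), i.e. the mixture
   E_X [ P(q d + Lap(1/X) \in S) ]. *)
Definition r2dp_laplace_prob {R : realType} {D : Type} (q : D -> R)
    (k theta : R) (d : D) (S : set R) : \bar R :=
  (\int[@lebesgue_measure R]_(x in `]0%R, +oo[)
     ((gamma_pdf k theta x)%:E *
      \int[@lebesgue_measure R]_(y in S) (laplace_pdf x^-1 (y - q d))%:E))%E.

Definition differentially_private {R : realType} {D : Type}
    (adj : D -> D -> Prop) (P : D -> set R -> \bar R) (eps : R) : Prop :=
  forall d d', adj d d' -> forall S : set R, measurable S ->
    (P d S <= (expR eps)%:E * P d' S)%E.

Definition is_sensitivity {R : realType} {D : Type}
    (adj : D -> D -> Prop) (q : D -> R) (Delta : R) : Prop :=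
  (forall d d', adj d d' -> `|q d - q d'| <= Delta) /\
  (forall e, (forall d d', adj d d' -> `|q d - q d'| <= e) -> Delta <= e).

(* Main.v *)
Require Import Defs.
From mathcomp Require Import all_boot all_order all_algebra.
From mathcomp Require Import all_classical all_reals all_analysis.
From mathcomp Require Import measurable_realfun.
From mathcomp Require Import ring lra.
Import Order.TTheory GRing.Theory Num.Theory.
Local Open Scope ring_scope.

Module Helpers.
Section S.
Local Set Implicit Arguments. Local Unset Strict Implicit.
Import numFieldNormedType.Exports.
Local Open Scope classical_set_scope.

Context {R : realType}.
Local Notation mu := (@lebesgue_measure R).

Lemma scale_preimage (t a b : R) : 0 < t ->
  (fun s : R => t * s) @^-1` `]a, b] = `]a / t, b / t]%classic.
Proof.
move=> t0; apply/seteqP; split => s /=; rewrite !in_itv /=;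
  by rewrite ltr_pdivrMr // ler_pdivlMr // ![s * t]mulrC.
Qed.

Lemma mscale_push (t : R) (t0 : 0 < t) :
  measurable_fun [set: R] (fun s : R => t * s).
Proof. exact: mulrl_measurable. Qed.

Lemma lebesgue_scale (t : R) (t0 : 0 < t) (A : set R) : measurable A ->
  mu A = (EFin t * pushforward mu ((fun s : R => (t * s)%R) : R -> measurableTypeR R) A)%E.
Proof.
move=> mA.
have mf := mscale_push t0.
have := @lebesgue_measure_unique R
  (mscale (NngNum (ltW t0)) (pushforward mu ((fun s : R => (t * s)%R) : R -> measurableTypeR R))) _ A mA.
apply.
move=> X [[a b] _ <-].
transitivity (t%:E * mu ((fun s : R => (t * s)%R) @^-1` `]a, b]%classic))%E; last by [].
rewrite scale_preimage //.
rewrite !lebesgue_measure_itv /= !lte_fin ltr_pM2r ?invr_gt0 //.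
case: ifP => _; last by rewrite mule0.
by rewrite -EFinD -EFinM; congr EFin; field; rewrite gt_eqF.
Unshelve. all: try exact mf.
Qed.

Lemma preimage_scale_oo (t : R) : 0 < t ->
  (fun s : R => t * s) @^-1` `]0%R, +oo[%classic = `]0%R, +oo[%classic.
Proof.
move=> t0; apply/seteqP; split => s /=; rewrite !in_itv /= !andbT;
  by rewrite pmulr_rgt0.
Qed.

Lemma integral_scale (t : R) (t0 : 0 < t) (f : R -> \bar R) :
  measurable_fun [set: R] f -> (forall x, 0 < x -> (0 <= f x)%E) ->
  (\int[mu]_(x in `]0%R, +oo[) f x =
   t%:E * \int[mu]_(s in `]0%R, +oo[) f (t * s)%R)%E.
Proof.
move=> mf f0.
have mp := mscale_push t0.
rewrite (eq_measure_integral
  (mscale (NngNum (ltW t0)) (pushforward mu ((fun s : R => (t * s)%R) : R -> measurableTypeR R)))); last first.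
  by move=> A mA _; exact: lebesgue_scale.
rewrite ge0_integral_mscale //=; first last.
- by move=> x /=; rewrite in_itv /= andbT; exact: f0.
- exact: measurable_funS mf.
rewrite ge0_integral_pushforward //; first last.
- by move=> x; rewrite inE /= in_itv /= andbT; exact: f0.
- exact: measurable_funS mf.
by rewrite preimage_scale_oo.
Unshelve. all: try exact mp.
Qed.

Definition phi (k c x : R) := x `^ (k - 1) * x * expR (- (x * c)).

Lemma measurable_phi k c : measurable_fun [set: R] (phi k c).
Proof.
apply: measurable_funM; first apply: measurable_funM.
- exact: measurable_powR.
- exact: measurable_id.
apply: measurableT_comp; first exact: measurable_expR.
apply: measurableT_comp; first exact: oppr_measurable.
exact: mulrr_measurable.
Qed.

Lemma phi_ge0 k c x : 0 <= x -> 0 <= phi k c x.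
Proof. by move=> x0; rewrite /phi !mulr_ge0 ?powR_ge0 ?expR_ge0. Qed.

Lemma phi_scale k c c' : 0 < k -> 0 < c -> 0 < c' ->
  (\int[mu]_(x in `]0%R, +oo[) (phi k c x)%:E =
   ((c' / c) `^ (k + 1))%:E * \int[mu]_(x in `]0%R, +oo[) (phi k c' x)%:E)%E.
Proof.
move=> k0 c0 c'0.
have t0 : 0 < c' / c by rewrite divr_gt0.
rewrite (integral_scale t0); first last.
- by move=> x x0; rewrite lee_fin phi_ge0 // ltW.
- by apply/measurable_EFinP; exact: measurable_phi.
transitivity ((c' / c)%:E * \int[mu]_(s in `]0%R, +oo[) (((c' / c) `^ (k - 1) * (c' / c))%:E * (phi k c' s)%:E))%E.
  congr (_ * _)%E; apply: eq_integral.
  move=> s; rewrite inE /= in_itv /= andbT => s0.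
  rewrite -EFinM /phi powRM ?(ltW t0) ?(ltW s0) //.
  have -> : c' / c * s * c = s * c' by field; rewrite gt_eqF.
  by congr (EFin _); ring.
rewrite ge0_integralZl_EFin //; first last.
- by rewrite mulr_ge0 ?powR_ge0 // ltW.
- by apply/measurable_EFinP; exact: measurable_funS (measurable_phi k c').
- by move=> x /=; rewrite in_itv /= andbT => x0; rewrite lee_fin phi_ge0 // ltW.
rewrite muleA -EFinM; congr (EFin _ * _)%E.
rewrite mulrA mulr_powRB1 ?(ltW t0) //.
rewrite -[in RHS](mulr_powRB1 (ltW t0)); last by rewrite addr_gt0.
by rewrite mulrC addrK.
Qed.

Section Fub.
Variables (A B : set R) (mA : measurable A) (mB : measurable B).
Variable F : R * R -> \bar R.
Hypothesis mF : measurable_fun [set: R * R] F.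
Hypothesis F0 : forall x y, A x -> B y -> (0 <= F (x, y))%E.

Let G := F \_ (A `*` B).

Let mG : measurable_fun [set: R * R] G.
Proof.
by apply/(measurable_restrictT _ _).1; [exact: measurableX|exact: measurable_funS mF].
Qed.

Let G0 z : (0 <= G z)%E.
Proof.
rewrite /G patchE; case: ifPn => // /set_mem [/= Az Bz].
by case: z Az Bz => x y /= Ax By; exact: F0.
Qed.

Let inner1 x : A x ->
  (\int[mu]_(y in B) F (x, y) = \int[mu]_y G (x, y))%E.
Proof.
move=> Ax; rewrite integral_mkcond; apply: eq_integral => y _.
have E : ((x, y) \in A `*` B) = (y \in B).
  by apply/idP/idP => [/set_mem[_ /= ?]|/set_mem ?]; apply/mem_set.
by rewrite /G !patchE E.
Qed.

Let inner1' x : ~ A x -> (\int[mu]_y G (x, y) = 0)%E.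
Proof.
move=> Ax; rewrite -(integral0 mu setT); apply: eq_integral => y _.
by rewrite /G patchE ifN //; apply/negP => /set_mem [].
Qed.

Let inner2 y : B y ->
  (\int[mu]_(x in A) F (x, y) = \int[mu]_x G (x, y))%E.
Proof.
move=> By; rewrite integral_mkcond; apply: eq_integral => x _.
have E : ((x, y) \in A `*` B) = (x \in A).
  by apply/idP/idP => [/set_mem[? _]|/set_mem ?]; apply/mem_set.
by rewrite /G !patchE E.
Qed.

Let inner2' y : ~ B y -> (\int[mu]_x G (x, y) = 0)%E.
Proof.
move=> By; rewrite -(integral0 mu setT); apply: eq_integral => x _.
by rewrite /G patchE ifN //; apply/negP => /set_mem [].
Qed.

Lemma fubini_restr :
  (\int[mu]_(x in A) \int[mu]_(y in B) F (x, y) =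
   \int[mu]_(y in B) \int[mu]_(x in A) F (x, y))%E.
Proof.
transitivity (\int[mu]_x \int[mu]_y G (x, y))%E.
  rewrite integral_mkcond; apply: eq_integral => x _; rewrite patchE.
  case: ifPn => [/set_mem Ax|/negP Ax]; first exact: inner1.
  by rewrite inner1' // => Ax'; apply: Ax; exact/mem_set.
rewrite (@fubini_tonelli _ _ _ _ _ mu mu G mG G0).
rewrite [RHS]integral_mkcond; apply: eq_integral => y _; rewrite patchE.
case: ifPn => [/set_mem By|/negP By]; first by rewrite inner2.
by rewrite inner2' // => By'; apply: By; exact/mem_set.
Qed.

Lemma measurable_inner :
  measurable_fun B (fun y => \int[mu]_(x in A) F (x, y))%E.
Proof.
apply: (eq_measurable_fun (fubini_G mu G)).
  by move=> y /set_mem By; rewrite inner2.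
exact: (measurable_funS measurableT (@subsetT _ B) (@measurable_fun_fubini_tonelli_G _ _ _ _ _ mu G mG G0)).
Qed.
End Fub.

Lemma measurable_laplace (b a : R) :
  measurable_fun [set: R] (fun y => laplace_pdf b (y - a)).
Proof.
rewrite /laplace_pdf.
apply: measurable_funM; first exact: measurable_cst.
apply: measurableT_comp; first exact: measurable_expR.
apply: measurable_funM; last exact: measurable_cst.
apply: measurableT_comp; first exact: oppr_measurable.
apply: measurableT_comp; first exact: normr_measurable.
apply: measurable_funB; first exact: measurable_id.
exact: measurable_cst.
Qed.

Lemma laplace_ge0 (b y : R) : 0 <= b -> 0 <= laplace_pdf b y.
Proof.
by move=> b0; rewrite /laplace_pdf mulr_ge0 ?expR_ge0 // invr_ge0 mulr_ge0.
Qed.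

Lemma Gamma_ge0 (k : R) : 0 <= Gamma_fun k.
Proof.
apply: fine_ge0; apply: integral_ge0 => x /=; rewrite in_itv /= andbT => x0.
by rewrite lee_fin mulr_ge0 ?powR_ge0 ?expR_ge0.
Qed.

Section Main.
Variables (k theta : R).
Hypotheses (k0 : 0 < k) (th0 : 0 < theta).

Let C := (Gamma_fun k * theta `^ k)^-1 / 2.

Let C0 : 0 <= C.
Proof.
by rewrite /C divr_ge0 // invr_ge0 mulr_ge0 ?Gamma_ge0 ?powR_ge0.
Qed.

Definition Fa (a : R) (p : R * R) : \bar R :=
  (C * phi k (theta^-1 + `|p.2 - a|) p.1)%:E.

Lemma claimA (a x y : R) :
  gamma_pdf k theta x * laplace_pdf x^-1 (y - a) =
  C * phi k (theta^-1 + `|y - a|) x.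
Proof.
rewrite /gamma_pdf /laplace_pdf /phi /C.
have -> : - (x * (theta^-1 + `|y - a|)) = - x / theta + - `|y - a| / x^-1.
  by rewrite invrK; ring.
rewrite expRD GRing.invfM invrK.
by rewrite invf_div; ring.
Qed.

Lemma measurable_Fa a : measurable_fun [set: R * R] (Fa a).
Proof.
apply/measurable_EFinP.
apply: measurable_funM; first exact: measurable_cst.
rewrite /phi.
apply: measurable_funM; first apply: measurable_funM.
- exact: measurableT_comp (measurable_powR _) measurable_fst.
- exact: measurable_fst.
apply: measurableT_comp; first exact: measurable_expR.
apply: measurableT_comp; first exact: oppr_measurable.
apply: measurable_funM; first exact: measurable_fst.
apply: measurable_funD; first exact: measurable_cst.
apply: measurableT_comp; first exact: normr_measurable.
apply: measurable_funB; first exact: measurable_snd.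
exact: measurable_cst.
Qed.

Lemma Fa_ge0 a x y : 0 < x -> (0 <= Fa a (x, y))%E.
Proof. by move=> x0; rewrite lee_fin mulr_ge0 // phi_ge0 // ltW. Qed.

Lemma r2dp_eq (a : R) (S : set R) : measurable S ->
  (\int[mu]_(x in `]0%R, +oo[)
     ((gamma_pdf k theta x)%:E *
      \int[mu]_(y in S) (laplace_pdf x^-1 (y - a))%:E) =
   \int[mu]_(y in S) \int[mu]_(x in `]0%R, +oo[) Fa a (x, y))%E.
Proof.
move=> mS.
rewrite -(fubini_restr _ mS (measurable_Fa a)); last first.
  by move=> x y /=; rewrite in_itv /= andbT => x0 _; exact: Fa_ge0.
  exact: measurable_itv.
apply: eq_integral => x; rewrite inE /= in_itv /= andbT => x0.
rewrite -ge0_integralZl_EFin //; first last.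
- by rewrite /gamma_pdf divr_ge0 ?mulr_ge0 ?powR_ge0 ?expR_ge0 ?Gamma_ge0.
- by apply/measurable_EFinP; exact: measurable_funS (measurable_laplace _ _).
- by move=> y _; rewrite lee_fin laplace_ge0 // invr_ge0 ltW.
by apply: eq_integral => y _; rewrite -EFinM claimA.
Qed.

Lemma pointwise (a a' y Delta : R) : 0 <= Delta -> `|a - a'| <= Delta ->
  (\int[mu]_(x in `]0%R, +oo[) Fa a (x, y) <=
   (expR ((k + 1) * ln (1 + Delta * theta)))%:E *
   \int[mu]_(x in `]0%R, +oo[) Fa a' (x, y))%E.
Proof.
move=> D0 hD.
have ti0 : 0 < theta^-1 by rewrite invr_gt0.
have c0 : 0 < theta^-1 + `|y - a| by rewrite ltr_wpDr.
have c'0 : 0 < theta^-1 + `|y - a'| by rewrite ltr_wpDr.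
have E b : (\int[mu]_(x in `]0%R, +oo[) Fa b (x, y) =
    C%:E * \int[mu]_(x in `]0%R, +oo[) (phi k (theta^-1 + `|y - b|) x)%:E)%E.
  rewrite -ge0_integralZl_EFin //; first last.
  - by apply/measurable_EFinP; exact: measurable_funS (measurable_phi _ _).
  - by move=> x /=; rewrite in_itv /= andbT => x0; rewrite lee_fin phi_ge0 // ltW.
rewrite !E (phi_scale k0 c0 c'0).
rewrite muleA -EFinM [X in (_ <= X)%E]muleA -EFinM.
apply: lee_wpmul2r.
  apply: integral_ge0 => x /=; rewrite in_itv /= andbT => x0.
  by rewrite lee_fin phi_ge0 // ltW.
rewrite lee_fin [X in _ <= X]mulrC; apply: ler_wpM2l => //.
have DT0 : 0 <= Delta * theta by rewrite mulr_ge0 // ltW.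
have -> : expR ((k + 1) * ln (1 + Delta * theta)) = (1 + Delta * theta) `^ (k + 1).
  by rewrite /powR gt_eqF //; lra.
apply: ge0_ler_powR.
- by rewrite addr_ge0 // ltW.
- by rewrite nnegrE divr_ge0 // ltW.
- by rewrite nnegrE; lra.
rewrite ler_pdivrMr //.
have h1 := lerB_dist (y - a') (y - a).
rewrite (_ : y - a' - (y - a) = a - a') in h1; last by ring.
have h2 := mulr_ge0 DT0 (normr_ge0 (y - a)).
have h3 : Delta * theta * theta^-1 = Delta by rewrite -mulrA mulfV ?gt_eqF // mulr1.
nra.
Qed.
End Main.

Lemma mainB (D : Type) (adj : D -> D -> Prop) (q : D -> R) (Delta k theta : R) :
  is_sensitivity adj q Delta -> 0 < k -> 0 < theta ->
  differentially_private adj (r2dp_laplace_prob q k theta)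
    ((k + 1) * ln (1 + Delta * theta)).
Proof.
move=> [Hs _] k0 th0 d d' adj_dd' S mS.
have D0 : 0 <= Delta := le_trans (normr_ge0 _) (Hs d d' adj_dd').
rewrite /r2dp_laplace_prob !r2dp_eq //.
have mI : measurable (`]0%R, +oo[%classic : set R) by exact: measurable_itv.
have F0 b : forall x y, `]0%R, +oo[%classic x -> S y -> (0 <= Fa k theta b (x, y))%E.
  by move=> x y /=; rewrite in_itv /= andbT => x0 _; exact: Fa_ge0.
rewrite -ge0_integralZl_EFin //; first last.
- exact: (measurable_inner mI mS (measurable_Fa k theta _) (F0 _)).
- move=> y Sy; apply: integral_ge0 => x Ix; exact: F0.
apply: ge0_le_integral => //.
- move=> y Sy; apply: integral_ge0 => x Ix; exact: F0.
- exact: (measurable_inner mI mS (measurable_Fa k theta _) (F0 _)).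
- apply: measurable_funeM.
  exact: (measurable_inner mI mS (measurable_Fa k theta _) (F0 _)).
by move=> y _; exact: (pointwise k0 th0 y D0 (Hs d d' adj_dd')).
Qed.
End S.
End Helpers.

Theorem theoremB3 (R : realType) (D : Type) (adj : D -> D -> Prop)
    (q : D -> R) (Delta k theta : R) :
  is_sensitivity adj q Delta -> 0 < k -> 0 < theta ->
  differentially_private adj (r2dp_laplace_prob q k theta)
    ((k + 1) * ln (1 + Delta * theta)).
Proof. exact: Helpers.mainB. Qed.
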